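(* $\mathcal{OBLOT}^{F}_{\mathcal{F.V.}} > \mathcal{OBLOT}^{F}_{\mathcal{L.V.}}$, i.e. the model $\mathcal{OBLOT}$ under the fully synchronous scheduler with full visibility is computationally more powerful than the model $\mathcal{OBLOT}$ under the fully synchronous scheduler with limited visibility.
   Context: Robots are anonymous, identical, autonomous computational entities viewed as points moving in the Euclidean plane. Each has its own local coordinate system, with no agreement between robots and no common chirality, and perceives itself at its origin. Robots operate in Look-Compute-Move cycles. In Look a robot takes an instantaneous snapshot of the positions (and visible lights, if any) of the robots it can see. In Compute it runs the common algorithm on the snapshot to obtain a destination. In Move it moves there. Models: - $\mathcal{OBLOT}$: robots are oblivious (no memory of previous cycles) and silent (no means of communication). - $\mathcal{LUMI}$: each robot carries a persistent light whose color is taken from a finite set and is set at the end of Compute; the light is visible to the robot itself and to the other robots. - $\mathcal{FSTA}$: the light is internal, visible only to its owner. It acts as a finite persistent state; there is no communication. - $\mathcal{FCOM}$: the light is visible only to the other robots. A robot does not see its own light and is otherwise oblivious. Schedulers: time is divided into rounds. Under the semi-synchronous scheduler $S$ (SSYNCH), in each round an adversarially chosen set of robots is activated and they perform one full cycle in perfect synchronization; every robot is activated infinitely often. Under the fully synchronous scheduler $F$ (FSYNCH), every robot is activated in every round. Visibility: - Full visibility $\mathcal{F.V.}$: every robot sees all robots. - Limited visibility $\mathcal{L.V.}$: a robot sees only the robots within a fixed distance $V_r$ of its current position, with $V_r$ the same for all robots. The visibility graph (robots adjacent iff they see each other) of the initial configuration is assumed connected. Relations: $\mathcal{M}^X_V$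 denotes model $\mathcal{M}$ under scheduler $X$ with visibility $V$. For a team $R$ of robots, $Task(\mathcal{M},X,V;R)$ is the set of problems (tasks where robots must form some configuration(s) subject to conditions) solvable by $R$ in that setting. $\mathcal{R}$ is the set of all teams, and $\mathcal{R}_n$ the set of teams of size $n$. - $\mathcal{M}^{X_1}_{V_1} \ge \mathcal{N}^{X_2}_{V_2}$ if for all $R\in\mathcal{R}$, $Task(\mathcal{M},X_1,V_1;R)\supseteq Task(\mathcal{N},X_2,V_2;R)$. - $>$ means $\ge$ holds and there exists $R\in\mathcal{R}$ with $Task(\mathcal{M},X_1,V_1;R)\setminus Task(\mathcal{N},X_2,V_2;R)\neq\emptyset$. - $\perp$ (incomparable) means there exist $R_1,R_2\in\mathcal{R}$ with $Task(\mathcal{M},X_1,V_1;R_1)\setminus Task(\mathcal{N},X_2,V_2;R_1)\neq\emptyset$ and $Task(\mathcal{N},X_2,V_2;R_2)\setminus Task(\mathcal{M},X_1,V_1;R_2)\neq\emptyset$. *)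

(* Defs.v *)
From Stdlib Require Import Reals List Relations.
Open Scope R_scope.

Definition point : Type := (R * R)%type.
Definition vsub (p q : point) : point := (fst p - fst q, snd p - snd q).
Definition vadd (p q : point) : point := (fst p + fst q, snd p + snd q).
Definition norm (v : point) : R := sqrt (fst v ^ 2 + snd v ^ 2).
Definition dist (p q : point) : R := norm (vsub p q).

(** A robot's local frame: origin at the robot's current position, an
    arbitrary orientation (rotation by the angle with cosine/sine
    [fr_cos]/[fr_sin]), an arbitrary handedness ([fr_refl]: no common
    chirality) and an arbitrary unit of distance ([fr_scale] > 0). *)
Record frame : Type := Frame {
  fr_cos : R; fr_sin : R; fr_refl : bool; fr_scale : R }.

Definition valid_frame (F : frame) : Prop :=
  fr_cos F ^ 2 + fr_sin F ^ 2 = 1 /\ 0 < fr_scale F.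

Definition flip (b : bool) (v : point) : point :=
  if b then (fst v, - snd v) else v.
Definition rot (c s : R) (v : point) : point :=
  (c * fst v - s * snd v, s * fst v + c * snd v).

Definition local_to_global (F : frame) (v : point) : point :=
  let w := rot (fr_cos F) (fr_sin F) (flip (fr_refl F) v) in
  (fr_scale F * fst w, fr_scale F * snd w).
Definition global_to_local (F : frame) (w : point) : point :=
  flip (fr_refl F)
    (rot (fr_cos F) (- fr_sin F) (/ fr_scale F * fst w, / fr_scale F * snd w)).

Record team : Type := Team {
  t_n : nat; t_Vr : R; t_n_pos : (0 < t_n)%nat; t_Vr_pos : 0 < t_Vr }.

(* robots of a team of size n are indexed 0 .. n-1 *)
Definition config : Type := nat -> point.
Definition execution : Type := nat -> config.

Inductive visibility : Type := FullVis | LimitedVis.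

Definition sees (vis : visibility) (T : team) (p q : point) : bool :=
  match vis with
  | FullVis => true
  | LimitedVis => if Rle_dec (dist p q) (t_Vr T) then true else false
  end.

Definition vis_edge (T : team) (C : config) (i j : nat) : Prop :=
  (i < t_n T)%nat /\ (j < t_n T)%nat /\ dist (C i) (C j) <= t_Vr T.
Definition vis_connected (T : team) (C : config) : Prop :=
  forall i j, (i < t_n T)%nat -> (j < t_n T)%nat ->
    clos_refl_trans nat (vis_edge T C) i j.

(** Oblivious, silent, anonymous, identical robots: the common algorithm maps
    (the known visibility radius expressed in local units, the snapshot) to a
    destination in local coordinates.  The snapshot is the list of local
    positions of the visible robots (including the robot itself, at the
    origin); the algorithm may depend only on the SET of visible positions
    (anonymity, no identities, no multiplicity detection). *)
Definition algorithm : Type := R -> list point -> point.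

Definition valid_algorithm (A : algorithm) : Prop :=
  forall r s1 s2, (forall p, In p s1 <-> In p s2) -> A r s1 = A r s2.

Definition snapshot (vis : visibility) (T : team) (F : frame) (C : config) (i : nat)
  : list point :=
  map (fun j => global_to_local F (vsub (C j) (C i)))
      (filter (fun j => sees vis T (C i) (C j)) (seq 0 (t_n T))).

(* One fully synchronous round: every robot performs Look-Compute-Move and
   reaches (rigidly) its computed destination. *)
Definition fsync_round (A : algorithm) (vis : visibility) (T : team)
  (frames : nat -> frame) (C : config) : config :=
  fun i =>
    if Nat.ltb i (t_n T) then
      vadd (C i) (local_to_global (frames i)
                    (A (t_Vr T / fr_scale (frames i)) (snapshot vis T (frames i) C i)))
    else C i.

Fixpoint fsync_exec (A : algorithm) (vis : visibility) (T : team)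
  (frames : nat -> frame) (C0 : config) (t : nat) : config :=
  match t with
  | O => C0
  | S t' => fsync_round A vis T frames (fsync_exec A vis T frames C0 t')
  end.

Definition problem : Type := team -> execution -> Prop.

Definition Task_OBLOT_F (vis : visibility) (T : team) (P : problem) : Prop :=
  exists A : algorithm, valid_algorithm A /\
    forall frames : nat -> frame, (forall i, valid_frame (frames i)) ->
    forall C0 : config, vis_connected T C0 ->
      P T (fsync_exec A vis T frames C0).

Definition setting : Type := team -> problem -> Prop.

Definition setting_ge (M N : setting) : Prop :=
  forall T P, N T P -> M T P.

Definition setting_gt (M N : setting) : Prop :=
  setting_ge M N /\ exists T P, M T P /\ ~ N T P.

(* Main.v *)
Require Import Defs.
From Stdlib Require Import Reals List Relations.
From Stdlib Require Import Lra Lia FunctionalExtensionality.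
Open Scope R_scope.

Lemma norm_g2l F w : valid_frame F ->
  norm (global_to_local F w) = / fr_scale F * norm w.
Proof.
  destruct F as [c s b k]; unfold valid_frame; simpl; intros [H1 H2].
  destruct w as [x y].
  assert (Hu : 0 < / k) by (apply Rinv_0_lt_compat; lra).
  unfold norm, global_to_local, flip, rot; cbn [fst snd fr_cos fr_sin fr_scale fr_refl].
  assert (E : / k * sqrt (x ^ 2 + y ^ 2) = sqrt (/k * /k * (x^2 + y^2))).
  { rewrite sqrt_mult; [| nra | nra]. rewrite sqrt_square by lra. reflexivity. }
  rewrite E; clear E.
  f_equal.
  destruct b; cbn [fst snd];
  (transitivity (/k * /k * (c^2 + s^2) * (x^2 + y^2)); [ring|]); replace (c^2+s^2) with 1 by (simpl; lra); ring.
Qed.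

Lemma norm_vsub_sym p q : norm (vsub q p) = Defs.dist p q.
Proof.
  unfold Defs.dist, norm, vsub; simpl. f_equal. ring.
Qed.

Lemma le_iff F p q Vr : valid_frame F ->
  (norm (global_to_local F (vsub q p)) <= Vr / fr_scale F <-> Defs.dist p q <= Vr).
Proof.
  intros HF. rewrite norm_g2l by auto. rewrite norm_vsub_sym.
  destruct HF as [_ Hk].
  assert (Hu : 0 < / fr_scale F) by (apply Rinv_0_lt_compat; lra).
  unfold Rdiv. split; intro H.
  - rewrite (Rmult_comm Vr) in H. apply Rmult_le_reg_l in H; auto.
  - rewrite (Rmult_comm Vr). apply Rmult_le_compat_l; lra.
Qed.

Lemma lt_iff F p q Vr : valid_frame F ->
  (Vr / fr_scale F < norm (global_to_local F (vsub q p)) <-> Vr < Defs.dist p q).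
Proof.
  intros HF. rewrite norm_g2l by auto. rewrite norm_vsub_sym.
  destruct HF as [_ Hk].
  assert (Hu : 0 < / fr_scale F) by (apply Rinv_0_lt_compat; lra).
  unfold Rdiv. split; intro H.
  - rewrite (Rmult_comm Vr) in H. apply Rmult_lt_reg_l in H; auto.
  - rewrite (Rmult_comm Vr). apply Rmult_lt_compat_l; lra.
Qed.

Definition simA (A : algorithm) : algorithm :=
  fun r s => A r (filter (fun p => if Rle_dec (norm p) r then true else false) s).

Lemma round_eq A T frames C : (forall i, valid_frame (frames i)) ->
  fsync_round (simA A) FullVis T frames C = fsync_round A LimitedVis T frames C.
Proof.
  intros Hf. apply functional_extensionality; intro i.
  unfold fsync_round. destruct (Nat.ltb i (t_n T)); [|reflexivity].
  f_equal. f_equal. unfold simA, snapshot. f_equal.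
  induction (seq 0 (t_n T)) as [|j l IH]; simpl; [reflexivity|].
  pose proof (le_iff (frames i) (C i) (C j) (t_Vr T) (Hf i)) as Hi.
  destruct (Rle_dec _ _) as [H|H]; destruct (Rle_dec (Defs.dist (C i) (C j)) (t_Vr T)) as [H'|H'];
    simpl in IH |- *; try rewrite IH; try reflexivity; exfalso; tauto.
Qed.

Lemma part1 : setting_ge (Task_OBLOT_F FullVis) (Task_OBLOT_F LimitedVis).
Proof.
  intros T P [A [HA HP]]. exists (simA A). split.
  - intros r s1 s2 H. unfold simA. apply HA. intro p. rewrite !filter_In, H. tauto.
  - intros frames Hf C0 Hc.
    replace (fsync_exec (simA A) FullVis T frames C0) with (fsync_exec A LimitedVis T frames C0).
    + apply HP; auto.
    + apply functional_extensionality; intro t. induction t; simpl; [reflexivity|].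
      rewrite IHt, round_eq; auto.
Qed.

Definition A0 : algorithm := fun r s =>
  if existsb (fun p => if Rlt_dec r (norm p) then true else false) s then (1, 0) else (0, 0).

Definition P0 : problem := fun T E => forall i, (i < t_n T)%nat ->
  (E 1%nat i = E 0%nat i <-> forall j, (j < t_n T)%nat -> Defs.dist (E 0%nat i) (E 0%nat j) <= t_Vr T).

Lemma A0_valid : valid_algorithm A0.
Proof.
  intros r s1 s2 H. unfold A0.
  assert (E : existsb (fun p => if Rlt_dec r (norm p) then true else false) s1 =
              existsb (fun p => if Rlt_dec r (norm p) then true else false) s2).
  { destruct (existsb _ s1) eqn:E1; destruct (existsb _ s2) eqn:E2; auto.
    - apply existsb_exists in E1. destruct E1 as [p [Hp Hq]].
      rewrite <- E2. symmetry. apply existsb_exists.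
      exists p; split; auto; apply H; auto.
    - apply existsb_exists in E2. destruct E2 as [p [Hp Hq]].
      rewrite <- E1. apply existsb_exists.
      exists p; split; auto; apply H; auto. }
  rewrite E; reflexivity.
Qed.

Lemma ex_snap T F C i : valid_frame F ->
  (existsb (fun p => if Rlt_dec (t_Vr T / fr_scale F) (norm p) then true else false)
     (snapshot FullVis T F C i) = true <->
   exists j, (j < t_n T)%nat /\ t_Vr T < Defs.dist (C i) (C j)).
Proof.
  intros HF. rewrite existsb_exists. unfold snapshot. split.
  - intros [p [Hp Hq]]. apply in_map_iff in Hp. destruct Hp as [j [Hj Hin]].
    apply filter_In in Hin. destruct Hin as [Hin _]. apply in_seq in Hin.
    exists j. split; [lia|]. subst p.
    destruct (Rlt_dec _ _) as [h|h]; [|discriminate].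
    apply (lt_iff F); auto.
  - intros [j [Hj Hd]]. exists (global_to_local F (vsub (C j) (C i))). split.
    + apply in_map_iff. exists j. split; auto. apply filter_In. split; auto.
      apply in_seq. lia.
    + destruct (Rlt_dec _ _) as [h|h]; auto. exfalso; apply h. apply (lt_iff F); auto.
Qed.

Lemma full_solves T : Task_OBLOT_F FullVis T P0.
Proof.
  exists A0. split; [apply A0_valid|].
  intros frames Hf C0 _ i Hi. simpl. unfold fsync_round.
  assert (Hl : Nat.ltb i (t_n T) = true) by (apply Nat.ltb_lt; auto).
  rewrite Hl. unfold A0.
  pose proof (ex_snap T (frames i) C0 i (Hf i)) as Hx.
  destruct (existsb _ _) eqn:E.
  - destruct (proj1 Hx eq_refl) as [j [Hj Hd]]. split.
    + intro H. exfalso.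
      destruct (Hf i) as [Hcs Hk].
      destruct (frames i) as [c s b k]; simpl in *.
      unfold vadd, local_to_global, rot, flip in H; simpl in H.
      destruct (C0 i) as [x y]; simpl in H.
      destruct b; simpl in H; injection H; intros H2 H1;
      assert (k * c = 0) by nra; assert (k * s = 0) by nra;
      assert (c = 0) by nra; assert (s = 0) by nra; subst; lra.
    + intro H. specialize (H j Hj). lra.
  - split.
    + intros _ j Hj. destruct (Rle_dec (Defs.dist (C0 i) (C0 j)) (t_Vr T)) as [h|h]; auto.
      exfalso. assert (false = true); [|discriminate]. apply Hx. exists j. split; auto. lra.
    + intros _. unfold vadd, local_to_global, rot, flip.
      destruct (frames i) as [c s b k]; destruct b; simpl;
      destruct (C0 i) as [x y]; simpl; f_equal; ring.
Qed.

Lemma three_pos : (0 < 3)%nat. Proof. lia. Qed.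
Lemma one_pos : 0 < 1. Proof. lra. Qed.
Definition T3 : team := Team 3 1 three_pos one_pos.
Definition F1 : frame := Frame 1 0 false 1.
Definition C1 : config := fun j => match j with 0%nat => (0,0) | 1%nat => (1,0) | _ => (2,0) end.
Definition C2 : config := fun j => match j with 1%nat => (1,0) | _ => (0,0) end.

Lemma d_le a b c d : (a - c)^2 + (b - d)^2 <= 1 -> Defs.dist (a,b) (c,d) <= 1.
Proof.
  intro H. unfold Defs.dist, norm, vsub; cbn [fst snd].
  rewrite <- sqrt_1. apply sqrt_le_1_alt. lra.
Qed.
Lemma d_gt a b c d : 1 < (a - c)^2 + (b - d)^2 -> 1 < Defs.dist (a,b) (c,d).
Proof.
  intro H. unfold Defs.dist, norm, vsub; cbn [fst snd].
  rewrite <- sqrt_1. apply sqrt_lt_1_alt. lra.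
Qed.

Ltac dsolve := first [ apply d_le; simpl; lra | apply d_gt; simpl; lra ].

Lemma conn1 : vis_connected T3 C1.
Proof.
  intros i j Hi Hj. simpl in Hi, Hj.
  assert (E01 : vis_edge T3 C1 0 1) by (split; [simpl; lia| split; [simpl; lia| simpl; dsolve]]).
  assert (E12 : vis_edge T3 C1 1 2) by (split; [simpl; lia| split; [simpl; lia| simpl; dsolve]]).
  assert (E10 : vis_edge T3 C1 1 0) by (split; [simpl; lia| split; [simpl; lia| simpl; dsolve]]).
  assert (E21 : vis_edge T3 C1 2 1) by (split; [simpl; lia| split; [simpl; lia| simpl; dsolve]]).
  destruct i as [|[|[|i]]]; try lia; destruct j as [|[|[|j]]]; try lia;
    try apply rt_refl; try (apply rt_step; assumption);
    eapply rt_trans; apply rt_step; eassumption.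
Qed.

Lemma conn2 : vis_connected T3 C2.
Proof.
  intros i j Hi Hj. simpl in Hi, Hj. apply rt_step.
  split; [simpl; lia| split; [simpl; lia|]].
  destruct i as [|[|[|i]]]; try lia; destruct j as [|[|[|j]]]; try lia; simpl; dsolve.
Qed.

Lemma snap1 : snapshot LimitedVis T3 F1 C1 0%nat =
  global_to_local F1 (vsub (C1 0%nat) (C1 0%nat)) :: global_to_local F1 (vsub (C1 1%nat) (C1 0%nat)) :: nil.
Proof.
  unfold snapshot. simpl seq. simpl filter.
  destruct (Rle_dec (Defs.dist (0,0) (0,0)) 1) as [h|h]; [|exfalso; apply h; dsolve].
  destruct (Rle_dec (Defs.dist (0,0) (1,0)) 1) as [h'|h']; [|exfalso; apply h'; dsolve].
  destruct (Rle_dec (Defs.dist (0,0) (2,0)) 1) as [h''|h''];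
    [exfalso; assert (1 < Defs.dist (0,0) (2,0)) by dsolve; lra|].
  reflexivity.
Qed.

Lemma snap2 : snapshot LimitedVis T3 F1 C2 0%nat =
  global_to_local F1 (vsub (C1 0%nat) (C1 0%nat)) :: global_to_local F1 (vsub (C1 1%nat) (C1 0%nat))
  :: global_to_local F1 (vsub (C1 0%nat) (C1 0%nat)) :: nil.
Proof.
  unfold snapshot. simpl seq. simpl filter.
  destruct (Rle_dec (Defs.dist (0,0) (0,0)) 1) as [h|h]; [|exfalso; apply h; dsolve].
  destruct (Rle_dec (Defs.dist (0,0) (1,0)) 1) as [h'|h']; [|exfalso; apply h'; dsolve].
  reflexivity.
Qed.

Lemma F1_valid : forall i : nat, valid_frame ((fun _ => F1) i).
Proof. intros i. unfold valid_frame, F1; simpl. split; lra. Qed.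

Lemma lim_fails : ~ Task_OBLOT_F LimitedVis T3 P0.
Proof.
  intros [A [HA HP]].
  pose proof (HP (fun _ => F1) F1_valid C1 conn1 0%nat ltac:(simpl; lia)) as H1.
  pose proof (HP (fun _ => F1) F1_valid C2 conn2 0%nat ltac:(simpl; lia)) as H2.
  simpl in H1, H2. unfold fsync_round in H1, H2. simpl Nat.ltb in H1, H2.
  cbv iota in H1, H2.
  rewrite snap1 in H1. rewrite snap2 in H2.
  set (l1 := _ :: _ :: nil) in H1.
  set (l2 := _ :: _ :: _ :: nil) in H2.
  assert (HE : A (t_Vr T3 / fr_scale F1) l1 = A (t_Vr T3 / fr_scale F1) l2).
  { apply HA. intro p. unfold l1, l2. simpl. tauto. }
  assert (Hb : (0 <? 3)%nat = true) by reflexivity. rewrite Hb in H1, H2.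
  rewrite HE in H1.
  assert (Hs : vadd (C1 0%nat) (local_to_global F1 (A (t_Vr T3 / fr_scale F1) l2)) = C1 0%nat).
  { change (C1 0%nat) with (C2 0%nat). apply H2. intros j Hj. simpl in Hj.
    destruct j as [|[|[|j]]]; try lia; simpl; dsolve. }
  pose proof (proj1 H1 Hs 2%nat ltac:(lia)) as Hs2.
  assert (1 < Defs.dist (C1 0%nat) (C1 2%nat)) by (simpl; dsolve). simpl in *. lra.
Qed.

Theorem theorem1 :
  setting_gt (Task_OBLOT_F FullVis) (Task_OBLOT_F LimitedVis).
Proof.
  split; [apply part1|]. exists T3, P0. split; [apply full_solves | apply lim_fails].
Qed.
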